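(* Let $G$ be a connected graph with $n$ vertices, where $n$ is a multiple of $3$. If $G$ contains a cycle of length at least $4$, then $G$ is detachable.
   Context: A connected graph $G$ with $n$ vertices, $n$ a multiple of $3$, is detachable if its vertex set can be partitioned into two nonempty sets $V_1,V_2$ such that $|V_1|$ and $|V_2|$ are both multiples of $3$ and the induced subgraphs $G[V_1]$ and $G[V_2]$ are both connected (equivalently, there is an edge cut separating $G$ into two connected subgraphs whose sizes are multiples of $3$). *)

(* Defs.v *)
From mathcomp Require Import all_boot.
Set Implicit Arguments. Unset Strict Implicit. Unset Printing Implicit Defensive.

Definition simple_graph (T : finType) (e : rel T) : Prop :=
  symmetric e /\ irreflexive e.

Definition induced_rel (T : finType) (e : rel T) (A : {set T}) : rel T :=
  [rel x y | [&& x \in A, y \in A & e x y]].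

(* G[A] is connected (A nonempty is required separately where needed) *)
Definition induced_connected (T : finType) (e : rel T) (A : {set T}) : Prop :=
  forall x y, x \in A -> y \in A -> connect (induced_rel e A) x y.

Definition connected_graph (T : finType) (e : rel T) : Prop :=
  forall x y : T, connect e x y.

Definition has_cycle_ge4 (T : finType) (e : rel T) : Prop :=
  exists c : seq T, [/\ 4 <= size c, uniq c & cycle e c].

Definition detachable (T : finType) (e : rel T) : Prop :=
  exists V1 V2 : {set T},
    [/\ V1 :&: V2 = set0, V1 :|: V2 = setT, V1 != set0 /\ V2 != set0,
        (3 %| #|V1|)%N /\ (3 %| #|V2|)%N
      & induced_connected e V1 /\ induced_connected e V2].

(* Main.v *)
Require Import Defs.
From mathcomp Require Import all_boot.
From mathcomp Require Import zify.
Set Implicit Arguments. Unset Strict Implicit. Unset Printing Implicit Defensive.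

Section Aux.
Variables (T : finType) (e : rel T).
Hypothesis esym : symmetric e.

Lemma induced_sym (A : {set T}) : symmetric (induced_rel e A).
Proof. by move=> x y; rewrite /induced_rel /= esym andbCA. Qed.

Lemma induced_csym (A : {set T}) x y :
  connect (induced_rel e A) x y = connect (induced_rel e A) y x.
Proof. exact: (sym_connect_sym (induced_sym A)). Qed.

Lemma induced_mono (A B : {set T}) x y : A \subset B ->
  connect (induced_rel e A) x y -> connect (induced_rel e B) x y.
Proof.
move=> sAB; apply: connect_sub => a b /= /and3P [Ha Hb Hab].
by apply: connect1; rewrite /induced_rel /= Hab !(subsetP sAB).
Qed.

Lemma edge_cross (P : pred T) a b : connect e a b -> P a -> ~~ P b ->
  exists x y, [&& e x y, P x & ~~ P y].
Proof.
move=> /connectP [p]; elim: p a => [|z p IH] a /=.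
  by move=> _ -> ->.
move=> /andP [Haz Hp] Hb Pa Pb.
case Pz: (P z); first exact: (IH z Hp Hb Pz Pb).
by exists a, z; rewrite Haz Pa Pz.
Qed.

End Aux.

Section Assign.
Variables (T : finType) (e : rel T) (c : seq T).
Hypothesis esym : symmetric e.
Hypothesis econn : connected_graph e.

Definition good (g : T -> option T) : Prop :=
  [/\ forall v, v \in c -> g v = Some v,
      forall x v, g x = Some v -> v \in c &
      forall v, v \in c -> induced_connected e [set x | g x == Some v]].

Definition fgood (f : T -> T) : Prop :=
  [/\ forall v, v \in c -> f v = v,
      forall x, f x \in c &
      forall v, v \in c -> induced_connected e [set x | f x == v]].

Lemma good_finish g : good g -> (forall x, g x != None) -> exists f, fgood f.
Proof.
move=> [g1 g2 g3] gt; exists (fun x => odflt x (g x)); split.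
- by move=> v /g1 ->.
- by move=> x; case E: (g x) (gt x) => [v|] // _; exact: g2 E.
- move=> v /g3 H.
  have -> : [set x | odflt x (g x) == v] = [set x | g x == Some v] => //.
  apply/setP => x; rewrite !inE; case E: (g x) (gt x) => [w|] //.
Qed.

Lemma good_step g y x v : good g -> g y = None -> g x = Some v -> e x y ->
  good (fun z => if z == y then Some v else g z).
Proof.
move=> [g1 g2 g3] gy gx exy; split.
- move=> w wc; case: (w =P y) => [ew|_]; last exact: g1.
  by move: gy; rewrite -ew g1.
- move=> z w; case: ifP => [_ [<-]|_]; [exact: g2 gx | exact: g2].
- move=> w wc; have [ewv|nwv] := eqVneq w v.
  + subst w => a b; rewrite !inE.
    have xy : x != y by apply/eqP => exy'; move: gy; rewrite -exy' gx.
    suff H : forall a, (if a == y then Some v else g a) == Some v ->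
       connect (induced_rel e [set z | (if z == y then Some v else g z) == Some v]) a x.
      by move=> /H Ha /H Hb; apply: connect_trans Ha _; rewrite induced_csym.
    have sub : [set z | g z == Some v] \subset
               [set z | (if z == y then Some v else g z) == Some v].
      by apply/subsetP => z; rewrite !inE; case: ifP.
    move=> a'; case: ifP => [/eqP ->|nay] Ha.
      apply: connect1; rewrite /induced_rel /= !inE eqxx (negbTE xy) gx eqxx /=.
      by rewrite esym.
    apply: (induced_mono sub); apply: (g3 v (g2 _ _ gx)); by rewrite inE ?gx.
  + have -> : [set z | (if z == y then Some v else g z) == Some w] =
              [set z | g z == Some w]; last exact: g3.
    apply/setP => z; rewrite !inE; case: ifP => [/eqP ->|//].
    by rewrite gy; apply/eqP => -[] /eqP; rewrite eq_sym (negbTE nwv).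
Qed.

Lemma good_ind c0 n g : c0 \in c -> #|[set x | g x == None]| <= n -> good g -> exists f, fgood f.
Proof.
move=> c0c.
elim: n g => [|n IH] g Hn Hg.
  apply: (good_finish Hg) => x; apply/negP => /eqP gx.
  by move: Hn; rewrite leqn0 => /eqP/cards0_eq/setP/(_ x); rewrite !inE gx.
case: (set_0Vmem [set x | g x == None]) => [H0|[u]].
  apply: (good_finish Hg) => x; apply/negP => /eqP gx.
  by move/setP: H0 => /(_ x); rewrite !inE gx.
rewrite inE => /eqP gu.
have [Hg1 Hg2 Hg3] := Hg.
have := edge_cross (P := fun z => g z != None) (econn c0 u).
rewrite /= (Hg1 _ c0c) gu => /(_ isT isT) [x [y /and3P [exy gx]]].
rewrite negbK => /eqP gy.
case E: (g x) gx => [v|//] _.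
apply: (IH (fun z => if z == y then Some v else g z)); last first.
  exact: (good_step Hg gy E exy).
have Hy : y \in [set x | g x == None] by rewrite inE gy.
have : [set z | (if z == y then Some v else g z) == None] = [set x | g x == None] :\ y.
  by apply/setP => z; rewrite !inE; case: ifP.
move=> ->; move: Hn; rewrite (cardsD1 y) Hy; lia.
Qed.

End Assign.

Lemma good_exists (T : finType) (e : rel T) (c : seq T) c0 :
  symmetric e -> connected_graph e -> c0 \in c -> exists f, fgood e c f.
Proof.
move=> esym econn c0c.
apply: (good_ind esym econn (n := #|[set x | (fun x => if x \in c then Some x else None) x == None]|) c0c (leqnn _)).
split.
- by move=> v ->.
- by move=> x v; case: ifP => // xc [<-].
- move=> v vc a b; rewrite !inE.
  case: ifP => // _ /eqP [->]; case: ifP => // _ /eqP [->]; exact: connect0.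
Qed.

Section Split.
Variables (T : finType) (e : rel T) (c : seq T) (f : T -> T).
Hypothesis esym : symmetric e.
Hypothesis fg : fgood e c f.

Definition S (s : seq T) : {set T} := [set x | f x \in s].

Lemma path_conn (A : {set T}) h t : path e h t -> {subset h :: t <= A} ->
  forall y, y \in h :: t -> connect (induced_rel e A) y h.
Proof.
elim: t h => [|h' t IH] h /=.
  by move=> _ _ y; rewrite inE => /eqP ->.
move=> /andP [ehh' Hp] Hsub y; rewrite inE => /orP [/eqP -> //|ys].
apply: (connect_trans (IH h' Hp _ y ys)).
  by move=> z zs; apply: Hsub; rewrite inE zs orbT.
apply: connect1; rewrite /induced_rel /= esym ehh' !Hsub ?inE ?eqxx ?orbT //.
Qed.

Lemma chain_conn h t : path e h t -> {subset h :: t <= c} ->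
  induced_connected e (S (h :: t)).
Proof.
move=> Hp Hsub.
have [f1 f2 f3] := fg.
have toh : forall y, y \in h :: t -> connect (induced_rel e (S (h :: t))) y h.
  apply: path_conn => //.
  by move=> z zs; rewrite inE f1 ?zs // Hsub.
have tof : forall x, x \in S (h :: t) -> connect (induced_rel e (S (h :: t))) x (f x).
  move=> x xS.
  have sub : [set z | f z == f x] \subset S (h :: t).
    by apply/subsetP => z; rewrite !inE => /eqP ->; rewrite inE in xS.
  apply: (induced_mono sub); apply: (f3 _ (f2 x)); rewrite inE ?(f1 _ (f2 x)) //.
move=> x y xS yS.
have xs : f x \in h :: t by rewrite inE in xS.
have ys : f y \in h :: t by rewrite inE in yS.
apply: (connect_trans (tof x xS)); apply: (connect_trans (toh _ xs)).
rewrite (sym_connect_sym (induced_sym esym _)).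
exact: (connect_trans (tof y yS) (toh _ ys)).
Qed.

Lemma card_S s : uniq s -> #|S s| = \sum_(v <- s) #|S [:: v]|.
Proof.
elim: s => [|v s IH] /=.
  by rewrite big_nil (_ : S [::] = set0) ?cards0 //; apply/setP => x; rewrite !inE.
move=> /andP [vs us]; rewrite big_cons -IH //.
have -> : S (v :: s) = S [:: v] :|: S s by apply/setP => x; rewrite !inE.
have I0 : S [:: v] :&: S s = set0.
  apply/setP => x; rewrite !inE; apply/negP => /andP [/eqP fv fs].
  by move: vs; rewrite -fv fs.
by rewrite -cardsUI I0 cards0 addn0.
Qed.

Lemma split_detach s1 s2 r : s1 != [::] -> s2 != [::] ->
  s1 ++ s2 = rot r c -> uniq c -> cycle e c ->
  (3 %| #|T|) -> (3 %| #|S s1|) -> detachable e.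
Proof.
case: s1 => [//|h1 t1] _; case: s2 => [//|h2 t2] _ Hrot Hu Hc H3T H3.
have [f1 f2 f3] := fg.
have memc : forall x, (x \in c) = (x \in (h1 :: t1) ++ h2 :: t2).
  by move=> x; rewrite Hrot mem_rot.
have Hu' : uniq ((h1 :: t1) ++ h2 :: t2) by rewrite Hrot rot_uniq.
have Hc' : cycle e ((h1 :: t1) ++ h2 :: t2) by rewrite Hrot rot_cycle.
move: Hc'; rewrite /= rcons_cat cat_path /= rcons_path => /and4P [p1 e12 p2 _].
have I0 : S (h1 :: t1) :&: S (h2 :: t2) = set0.
  apply/setP => x; rewrite !inE; apply/negP => /andP [a b].
  move: Hu'; rewrite cat_uniq => /and3P [_ /hasP []]; by exists (f x).
have U0 : S (h1 :: t1) :|: S (h2 :: t2) = setT.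
  apply/setP => x; rewrite !inE; have := f2 x; by rewrite memc mem_cat.
exists (S (h1 :: t1)), (S (h2 :: t2)); split => //.
- split; apply/set0Pn.
    by exists h1; rewrite inE f1 ?memc ?mem_cat mem_head.
  by exists h2; rewrite inE f1 ?memc ?mem_cat mem_head ?orbT.
- split => //.
  have := cardsUI (S (h1 :: t1)) (S (h2 :: t2)).
  rewrite U0 I0 cards0 cardsT addn0 => HT.
  by rewrite (_ : #|S (h2 :: t2)| = #|T| - #|S (h1 :: t1)|) ?dvdn_sub //; lia.
- split; apply: chain_conn => // z zs; rewrite memc mem_cat zs ?orbT //.
Qed.

End Split.

Lemma pig3 a b c : (3 %| a) \/ (3 %| a + b) \/ (3 %| a + b + c) \/
   (3 %| b) \/ (3 %| b + c) \/ (3 %| c).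
Proof. lia. Qed.

Theorem lemma7 (T : finType) (e : rel T) :
  simple_graph e -> connected_graph e -> (3 %| #|T|)%N ->
  has_cycle_ge4 e -> detachable e.
Proof.
move=> [esym _] econn H3 [c [Hs Hu Hc]].
case: c Hs Hu Hc => [|v0 [|v1 [|v2 [|v3 rest]]]] // _ Hu Hc.
have [f Hf] := good_exists esym econn (mem_head v0 (v1 :: v2 :: v3 :: rest)).
have u3 := take_uniq 3 Hu; have u2 := take_uniq 2 Hu.
have u12 := take_uniq 2 (drop_uniq 1 Hu).
have c01 := card_S f u2; have c012 := card_S f u3; have c12 := card_S f u12.
rewrite !big_cons big_nil in c01 c012 c12.
have := pig3 #|S f [:: v0]| #|S f [:: v1]| #|S f [:: v2]|.
case=> [H|[H|[H|[H|[H|H]]]]].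
- apply: (split_detach esym Hf (s1 := [:: v0]) (s2 := [:: v1, v2, v3 & rest]) (r := 0)) => //.
  by rewrite rot0.
- apply: (split_detach esym Hf (s1 := [:: v0; v1]) (s2 := [:: v2, v3 & rest]) (r := 0)) => //.
  + by rewrite rot0.
  + by rewrite c01 addn0.
- apply: (split_detach esym Hf (s1 := [:: v0; v1; v2]) (s2 := [:: v3 & rest]) (r := 0)) => //.
  + by rewrite rot0.
  + by rewrite c012 addn0 addnA.
- by apply: (split_detach esym Hf (s1 := [:: v1]) (s2 := [:: v2, v3 & rest ++ [:: v0]]) (r := 1)).
- apply: (split_detach esym Hf (s1 := [:: v1; v2]) (s2 := [:: v3 & rest ++ [:: v0]]) (r := 1)) => //.
  by rewrite c12 addn0.
- by apply: (split_detach esym Hf (s1 := [:: v2]) (s2 := [:: v3 & rest ++ [:: v0; v1]]) (r := 2)).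
Qed.
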